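(* Let $\kappa$ be a regular cardinal and $M=\langle W,S\rangle$ a $\kappa$-downward directed multi-relational Kripke frame. Then $\theta_M:W\to\mathrm{At}(G(M))$, $\theta_M(w)=\{w\}$, is an isomorphism of multi-relational Kripke frames from $M$ to $F(G(M))$.
   Context: A multi-relational Kripke frame is a pair $\langle W,S\rangle$ with $W$ non-empty and $S$ a non-empty set of binary relations on $W$; it is $\kappa$-downward directed if for every $S'\subseteq S$ with $|S'|<\kappa$ there is $R\in S$ with $R\subseteq\bigcap S'$ (with $\bigcap\emptyset=W\times W$). A homomorphism $g:\langle W_1,S_1\rangle\to\langle W_2,S_2\rangle$ is a map $g:W_1\to W_2$ such that: (i) for every $x\in W_1$ and $R_2\in S_2$ there is $R_1\in S_1$ such that for all $y\in W_1$, $xR_1y$ implies $g(x)R_2g(y)$; (ii) for every $x\in W_1$ and $R_1\in S_1$ there is $R_2\in S_2$ such that for all $u\in W_2$, if $g(x)R_2u$ then there exists $y\in W_1$ with $xR_1y$ and $g(y)=u$. An isomorphism is a bijective homomorphism. $G(M)$ is the powerset Boolean algebra $\mathcal P(W)$ with $\Diamond_MX=\{w\mid\forall R\in S\ \exists x\in X\ (wRx)\}$; its atoms are the singletons. For a complete atomic modal algebra $A$, $F(A)=\langle\mathrm{At}(A),\{R(X)\mid X\subseteq A,|X|<\kappa\}\rangle$ with $a\,R(X)\,c\iff a\leq\bigwedge\{\Diamond x\mid x\in X,\ c\leq x\}$ (empty meet $=1$). *)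

(* Defs.v *)
From Stdlib Require Import Classical.
Set Implicit Arguments.

(* ---------- Cardinals (a cardinal kappa is represented by a type K) ---------- *)

Definition card_le (A B : Type) : Prop := exists f : A -> B, forall x y, f x = f y -> x = y.
Definition card_lt (A B : Type) : Prop := card_le A B /\ ~ card_le B A.

(* K is a regular cardinal: infinite, and a union (disjoint sum) of fewer than
   |K| sets each of size < |K| has size < |K|  (i.e. cf |K| = |K|). *)
Definition regular_cardinal (K : Type) : Prop :=
  card_le nat K /\
  forall (I : Type) (A : I -> Type),
    card_lt I K -> (forall i, card_lt (A i) K) -> card_lt {i : I & A i} K.

Definition rel (W : Type) := W -> W -> Prop.

Definition is_frame (W : Type) (S : rel W -> Prop) : Prop :=
  (exists w : W, True) /\ (exists R, S R).

(* kappa-downward directed, with  /\ emptyset = W x W *)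
Definition downward_directed (K : Type) (W : Type) (S : rel W -> Prop) : Prop :=
  forall S' : rel W -> Prop,
    (forall R, S' R -> S R) ->
    card_lt {R : rel W | S' R} K ->
    exists R, S R /\ forall x y, R x y -> forall R', S' R' -> R' x y.

Definition is_hom (W1 : Type) (S1 : rel W1 -> Prop)
                  (W2 : Type) (S2 : rel W2 -> Prop) (g : W1 -> W2) : Prop :=
  (forall (x : W1) (R2 : rel W2), S2 R2 ->
     exists R1, S1 R1 /\ forall y, R1 x y -> R2 (g x) (g y)) /\
  (forall (x : W1) (R1 : rel W1), S1 R1 ->
     exists R2, S2 R2 /\ forall u, R2 (g x) u -> exists y, R1 x y /\ g y = u).

Definition is_iso (W1 : Type) (S1 : rel W1 -> Prop)
                  (W2 : Type) (S2 : rel W2 -> Prop) (g : W1 -> W2) : Prop :=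
  is_hom S1 S2 g /\ (forall x y, g x = g y -> x = y) /\ (forall u, exists x, g x = u).

Definition pset (W : Type) := W -> Prop.
Definition subset {W : Type} (a b : pset W) : Prop := forall w, a w -> b w.

Definition Dia {W : Type} (S : rel W -> Prop) (X : pset W) : pset W :=
  fun w => forall R, S R -> exists x, X x /\ R w x.

Definition is_atom {W : Type} (a : pset W) : Prop :=
  (exists w, a w) /\
  forall b : pset W, subset b a -> (forall w, ~ b w) \/ (forall w, b w <-> a w).

Definition At (W : Type) : Type := {a : pset W | is_atom a}.

(* a R(X) c  iff  a <= /\ { Dia x | x in X, c <= x }  (empty meet = W) *)
Definition RX {W : Type} (S : rel W -> Prop) (X : pset W -> Prop) : rel (At W) :=
  fun a c => forall w, proj1_sig a w ->
               forall x, X x -> subset (proj1_sig c) x -> Dia S x w.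

Definition FG_rels (K : Type) {W : Type} (S : rel W -> Prop) : rel (At W) -> Prop :=
  fun R => exists X : pset W -> Prop, card_lt {x : pset W | X x} K /\ R = RX S X.

Lemma singleton_atom {W : Type} (w : W) : is_atom (fun v => v = w).
Proof.
  split; [exists w; reflexivity|].
  intros b Hb. destruct (classic (b w)) as [H|H].
  - right. intros v; split; [apply Hb|]. intros ->; exact H.
  - left. intros v Hv. pose proof (Hb v Hv) as E; simpl in E; subst; contradiction.
Qed.

Definition theta {W : Type} (w : W) : At W :=
  exist _ (fun v => v = w) (singleton_atom w).

(* Main.v *)
Require Import Defs.
From Stdlib Require Import Classical ClassicalEpsilon FunctionalExtensionality PropExtensionality ProofIrrelevance.

Lemma theta_surj {W : Type} (u : At W) : exists v, @theta W v = u.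
Proof.
  destruct u as [a Ha].
  destruct Ha as [[w Hw] Hat] eqn:Eha.
  destruct (Hat (fun v => v = w)) as [H|H].
  - intros v e; subst v; exact Hw.
  - exfalso; exact (H w eq_refl).
  - exists w.
    assert (E : (fun v => v = w) = a).
    { apply functional_extensionality; intro v; apply propositional_extensionality; apply H. }
    clear Eha. subst a. unfold theta. f_equal. apply proof_irrelevance.
Qed.

Lemma card_le_lt (A B C : Type) : card_le A B -> card_lt B C -> card_lt A C.
Proof.
  intros [f Hf] [[g Hg] Hn]. split.
  - exists (fun a => g (f a)). intros x y e. apply Hf, Hg, e.
  - intros [h Hh]. apply Hn. exists (fun c => f (h c)). intros x y e. apply Hh, Hf, e.
Qed.

Theorem theorem9p4 (K : Type) (W : Type) (S : rel W -> Prop) :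
  regular_cardinal K ->
  is_frame S ->
  downward_directed K S ->
  is_iso S (FG_rels K S) (@theta W).
Proof.
  intros [[fn Hfn] _] _ Hdd.
  split; [split|split].
  - intros x R2 [X [HX ->]].
    set (P := fun (p : {x' : pset W | X x'}) (R : rel W) =>
                S R /\ forall z, proj1_sig p z -> ~ R x z).
    set (f := fun p => epsilon (inhabits (fun _ _ : W => True)) (P p)).
    set (S' := fun R => exists p : {x' : pset W | X x'}, ~ Dia S (proj1_sig p) x /\ R = f p).
    assert (Hf : forall p, ~ Dia S (proj1_sig p) x -> P p (f p)).
    { intros p Hp. apply epsilon_spec.
      apply not_all_ex_not in Hp. destruct Hp as [R HR].
      exists R. apply imply_to_and in HR. destruct HR as [HSR HR].
      split; [exact HSR|]. intros z Hz HRz. apply HR. exists z; split; assumption. }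
    destruct (Hdd S') as [R1 [HR1 HR1']].
    + intros R [p [Hp ->]]. apply (Hf p Hp).
    + apply card_le_lt with {x' : pset W | X x'}; [|exact HX].
      exists (fun r : {R : rel W | S' R} => proj1_sig (constructive_indefinite_description (fun p : {x' : pset W | X x'} => ~ Dia S (proj1_sig p) x /\ proj1_sig r = f p) (proj2_sig r))).
      intros [r1 h1] [r2 h2] e. simpl in e.
      pose proof (proj2_sig (constructive_indefinite_description (fun p : {x' : pset W | X x'} => ~ Dia S (proj1_sig p) x /\ r1 = f p) h1)) as [_ E1].
      pose proof (proj2_sig (constructive_indefinite_description (fun p : {x' : pset W | X x'} => ~ Dia S (proj1_sig p) x /\ r2 = f p) h2)) as [_ E2].
      rewrite e in E1. assert (r1 = r2) by congruence. subst r2. f_equal. apply proof_irrelevance.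
    + exists R1. split; [exact HR1|].
      intros y Hxy w Hw x' Hx' Hsub. simpl in Hw. subst w.
      apply NNPP. intro Hn.
      pose (p := exist (fun x' => X x') x' Hx').
      assert (Hp : ~ Dia S (proj1_sig p) x) by exact Hn.
      destruct (Hf p Hp) as [_ Hz].
      apply (Hz y). { apply Hsub. simpl. reflexivity. }
      apply (HR1' x y Hxy). exists p. split; [exact Hp|reflexivity].
  - intros x R1 HR1.
    set (X := fun x' : pset W => x' = (fun z => ~ R1 x z)).
    exists (RX S X). split.
    + exists X. split; [split|].
      * exists (fun _ => fn 0). intros [a ha] [b hb] _.
        unfold X in ha, hb. subst; f_equal; apply proof_irrelevance.
      * intros [h Hh].
        assert (E : h (fn 0) = h (fn 1)).
        { destruct (h (fn 0)) as [a ha], (h (fn 1)) as [b hb].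
          unfold X in ha, hb. subst; f_equal; apply proof_irrelevance. }
        apply Hh, Hfn in E. discriminate.
      * reflexivity.
    + intros u Hu. destruct (theta_surj u) as [v <-].
      exists v. split; [|reflexivity].
      apply NNPP. intro Hn.
      assert (Hs : subset (proj1_sig (theta v)) (fun z => ~ R1 x z)).
      { intros w Hw. simpl in Hw. subst. exact Hn. }
      destruct (Hu x eq_refl (fun z => ~ R1 x z) eq_refl Hs R1 HR1) as [z [Hz HRz]].
      exact (Hz HRz).
  - intros x y e.
    assert (E := f_equal (fun a => proj1_sig a y) e). simpl in E.
    assert (H : y = x) by (rewrite E; reflexivity). symmetry; exact H.
  - exact theta_surj.
Qed.
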